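(* Let $a,b,d<0$ and $c>0$ and let $\{W_n(z)\}_{n\ge0}$ be the normalised sequence defined below. Then \[ x_\Delta^-<x_A<0<x_B\qquad\text{and}\qquad x_A<x_\Delta^+<x_B, \] and $A(x_\Delta^-)>0>A(x_\Delta^+)$. For every $n\ge1$: $(-1)^{\lceil n/2\rceil}W_n(x_A)>0$, $(-1)^nW_n(x_B)<0$, and $W_n(x_\Delta^-)<0$. Furthermore: (i) If $c\le c^-$, then $x_\Delta^+\le x_g^-\le x_g^+<0$, $(-1)^nW_n(x_g^\pm)>0$ for $n\ge1$, and \[ (-1)^nW_n(x_\Delta^+)\begin{cases}<0,&\text{if }\Delta_\Delta>\Delta_g\text{ and }n>n^+,\\ =0,&\text{if }\Delta_\Delta>\Delta_g\text{ and }n=n^+,\\ >0,&\text{otherwise.}\end{cases} \] (ii) If $c\ge c^+$, then $x_B<x_g^-$, $W_n(x_g^\pm)>0$ for $n\ge1$, and $(-1)^nW_n(x_\Delta^+)<0$ for all $n\ge2$.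
   Context: Let $a,b,c,d\in\mathbb{R}$ with $ac\ne0$, and put $A(z)=az+b$, $B(z)=cz+d$. The normalised sequence $\{W_n(z)\}_{n\ge0}$ is defined by $W_0(z)=1$, $W_1(z)=z$ and $W_n(z)=A(z)W_{n-1}(z)+B(z)W_{n-2}(z)$ for $n\ge2$. Notation (for $a,b,d<0<c$): - $\Delta_\Delta=-a^2d+abc+c^2$ (which is $>0$) and $x_\Delta^\pm=\dfrac{-ab-2c\pm2\sqrt{\Delta_\Delta}}{a^2}$ (zeros of $A(z)^2+4B(z)$). - $g(z)=(1-a)z^2-(b+c)z-d$, $\Delta_g=(b+c)^2+4d(1-a)$, $x_g^\pm=\dfrac{b+c\pm\sqrt{\Delta_g}}{2(1-a)}$ (zeros of $g$, real iff $c\le c^-$ or $c\ge c^+$). - $c^\pm=\pm2\sqrt{d(a-1)}-b$. - $x_A=-b/a$, $x_B=-d/c$, $h(z)=(2-a)z-b$, $n^+=-A(x_\Delta^+)/h(x_\Delta^+)$ (defined when $h(x_\Delta^+)\neq0$, in particular when $\Delta_\Delta>\Delta_g$). *)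

(* Defs.v *)
From Stdlib Require Import Reals.
Open Scope R_scope.

(* Pair (W_n(z), W_{n+1}(z)) of the normalised sequence
   W_0 = 1, W_1 = z, W_n = (a z + b) W_{n-1} + (c z + d) W_{n-2}. *)
Fixpoint Wpair (a b c d : R) (n : nat) (z : R) : R * R :=
  match n with
  | O => (1, z)
  | S m => let p := Wpair a b c d m z in
           (snd p, (a * z + b) * snd p + (c * z + d) * fst p)
  end.

Definition W (a b c d : R) (n : nat) (z : R) : R := fst (Wpair a b c d n z).

Definition Apol (a b z : R) : R := a * z + b.
Definition Bpol (c d z : R) : R := c * z + d.

Definition DeltaD (a b c d : R) : R := - a ^ 2 * d + a * b * c + c ^ 2.
Definition xDp (a b c d : R) : R :=
  (- a * b - 2 * c + 2 * sqrt (DeltaD a b c d)) / a ^ 2.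
Definition xDm (a b c d : R) : R :=
  (- a * b - 2 * c - 2 * sqrt (DeltaD a b c d)) / a ^ 2.

Definition Deltag (a b c d : R) : R := (b + c) ^ 2 + 4 * d * (1 - a).
Definition xgp (a b c d : R) : R := (b + c + sqrt (Deltag a b c d)) / (2 * (1 - a)).
Definition xgm (a b c d : R) : R := (b + c - sqrt (Deltag a b c d)) / (2 * (1 - a)).

Definition cp (a b d : R) : R := 2 * sqrt (d * (a - 1)) - b.
Definition cm (a b d : R) : R := - 2 * sqrt (d * (a - 1)) - b.

Definition xA (a b : R) : R := - b / a.
Definition xB (c d : R) : R := - d / c.
Definition hpol (a b z : R) : R := (2 - a) * z - b.
Definition nplus (a b c d : R) : R :=
  - Apol a b (xDp a b c d) / hpol a b (xDp a b c d).

Definition ceil_half (n : nat) : nat := Nat.div (n + 1) 2.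

(* Main.v *)
Require Import Defs.
From Stdlib Require Import Reals Lra Lia Psatz.
Open Scope R_scope.

Lemma Wrec a b c d n z :
  W a b c d (S (S n)) z = (a*z+b) * W a b c d (S n) z + (c*z+d) * W a b c d n z.
Proof. reflexivity. Qed.

Lemma Wshift a b c d z m (f : nat -> R) :
  f 0%nat = W a b c d m z -> f 1%nat = W a b c d (S m) z ->
  (forall n, f (S (S n)) = (a*z+b) * f (S n) + (c*z+d) * f n) ->
  forall n, W a b c d (n + m) z = f n.
Proof.
  intros H0 H1 Hr.
  assert (forall n, W a b c d (n + m) z = f n /\ W a b c d (S n + m) z = f (S n)).
  { induction n as [|n [IH1 IH2]].
    - simpl. split; auto.
    - split; auto. simpl. simpl in IH2. rewrite Wrec, Hr. rewrite <- IH2, <- IH1. reflexivity. }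
  intro n; apply H.
Qed.

Lemma Wroot a b c d z : z^2 = (a*z+b)*z + (c*z+d) -> forall n, W a b c d n z = z ^ n.
Proof.
  intros Hz n. pose proof (Wshift a b c d z 0 (fun n => z ^ n)) as H.
  rewrite <- (Nat.add_0_r n) at 1. apply H.
  - reflexivity.
  - change (W a b c d 1 z) with z. simpl. ring.
  - intro k. simpl. simpl in Hz. transitivity (z ^ k * (z*(z*1))). ring. rewrite Hz. ring.
Qed.

Lemma Wdouble a b c d z l : a*z+b = 2*l -> c*z+d = -l^2 ->
  forall n, W a b c d (S n) z = l ^ n * (l + INR (S n) * (z - l)).
Proof.
  intros HA HB n. rewrite <- (Nat.add_1_r n) at 1.
  apply (Wshift a b c d z 1 (fun n => l ^ n * (l + INR (S n) * (z - l)))).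
  - change (W a b c d 1 z) with z. simpl. ring.
  - change (W a b c d 2 z) with ((a*z+b)*z + (c*z+d)*1). rewrite HA, HB. simpl. ring.
  - intro k. rewrite HA, HB. rewrite !S_INR. simpl. ring.
Qed.

Lemma ceil_half_SS n : ceil_half (S (S n)) = S (ceil_half n).
Proof.
  unfold ceil_half. replace (S (S n) + 1)%nat with ((n + 1) + 1 * 2)%nat by lia.
  rewrite Nat.div_add by lia. lia.
Qed.

Lemma WxA a b c d z : a*z+b = 0 -> c*z+d < 0 -> z < 0 ->
  forall n, (1 <= n)%nat -> (-1) ^ ceil_half n * W a b c d n z > 0.
Proof.
  intros HA HB Hz.
  assert (forall n, (-1) ^ ceil_half (S n) * W a b c d (S n) z > 0 /\
                    (-1) ^ ceil_half (S (S n)) * W a b c d (S (S n)) z > 0).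
  { induction n as [|n [IH1 IH2]].
    - split.
      + change (ceil_half 1) with 1%nat. change (W a b c d 1 z) with z. simpl. lra.
      + change (ceil_half 2) with 1%nat. rewrite Wrec. rewrite HA.
        change (W a b c d 0 z) with 1. simpl. lra.
    - split; auto. rewrite Wrec, HA, ceil_half_SS. simpl.
      replace (-1 * (-1) ^ ceil_half (S n) * (0 * W a b c d (S (S n)) z + (c * z + d) * W a b c d (S n) z))
        with (-(c*z+d) * ((-1) ^ ceil_half (S n) * W a b c d (S n) z)) by ring.
      apply Rmult_lt_0_compat; lra. }
  intros n Hn. destruct n as [|n]. lia. apply H.
Qed.

Lemma WxB a b c d z : c*z+d = 0 -> a*z+b < 0 -> z > 0 ->
  forall n, (1 <= n)%nat -> (-1) ^ n * W a b c d n z < 0.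
Proof.
  intros HB HA Hz.
  assert (forall n, (-1) ^ (S n) * W a b c d (S n) z < 0).
  { induction n as [|n IH].
    - change (W a b c d 1 z) with z. simpl. lra.
    - rewrite Wrec, HB.
      replace ((-1) ^ S (S n) * ((a * z + b) * W a b c d (S n) z + 0 * W a b c d n z))
        with (-(a*z+b) * ((-1) ^ (S n) * W a b c d (S n) z)) by (simpl; ring).
      assert (0 < -(a*z+b)) by lra. nra. }
  intros n Hn. destruct n as [|n]. lia. apply H.
Qed.

Lemma sign_pow l n X : (-1) ^ (S n) * (l ^ n * X) = (- l) ^ n * (- X).
Proof.
  replace (-l) with (-1 * l) by ring. rewrite Rpow_mult_distr. simpl. ring.
Qed.

Lemma groot a b c d z sg : a < 1 -> sg^2 = (b+c)^2 + 4*d*(1-a) ->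
  (2*(1-a)*z - (b+c))^2 = sg^2 -> z^2 = (a*z+b)*z + (c*z+d).
Proof.
  intros Ha H1 H2.
  assert (4*(1-a)*(z^2 - ((a*z+b)*z + (c*z+d))) = 0) by nra.
  apply Rmult_integral in H. destruct H; [lra|]. lra.
Qed.

Lemma sq_le x y : 0 <= y -> x^2 <= y^2 -> x <= y.
Proof.
  intros Hy H. destruct (Rle_or_lt x y) as [|Hlt]; auto.
  assert ((x-y)*(x+y) > 0) by (apply Rmult_lt_0_compat; lra). nra.
Qed.

Lemma sq_lt x y : 0 <= y -> x^2 < y^2 -> x < y.
Proof.
  intros Hy H. destruct (Rlt_or_le x y) as [|Hle]; auto.
  assert ((x-y)*(x+y) >= 0) by (apply Rle_ge, Rmult_le_pos; lra). nra.
Qed.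

Lemma pos_neg x y : 0 < x -> y < 0 -> x * y < 0.
Proof. intros. nra. Qed.

Theorem lemma4p1 (a b c d : R) (ha : a < 0) (hb : b < 0) (hd : d < 0) (hc : 0 < c) :
  (xDm a b c d < xA a b /\ xA a b < 0 /\ 0 < xB c d) /\
  (xA a b < xDp a b c d /\ xDp a b c d < xB c d) /\
  (Apol a b (xDm a b c d) > 0 /\ 0 > Apol a b (xDp a b c d)) /\
  (forall n : nat, (1 <= n)%nat ->
     (-1) ^ ceil_half n * W a b c d n (xA a b) > 0 /\
     (-1) ^ n * W a b c d n (xB c d) < 0 /\
     W a b c d n (xDm a b c d) < 0) /\
  (c <= cm a b d ->
     (xDp a b c d <= xgm a b c d /\ xgm a b c d <= xgp a b c d /\ xgp a b c d < 0) /\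
     (forall n : nat, (1 <= n)%nat ->
        (-1) ^ n * W a b c d n (xgp a b c d) > 0 /\
        (-1) ^ n * W a b c d n (xgm a b c d) > 0) /\
     (forall n : nat, (1 <= n)%nat ->
        ((DeltaD a b c d > Deltag a b c d /\ INR n > nplus a b c d) ->
           (-1) ^ n * W a b c d n (xDp a b c d) < 0) /\
        ((DeltaD a b c d > Deltag a b c d /\ INR n = nplus a b c d) ->
           (-1) ^ n * W a b c d n (xDp a b c d) = 0) /\
        (~ (DeltaD a b c d > Deltag a b c d /\ INR n >= nplus a b c d) ->
           (-1) ^ n * W a b c d n (xDp a b c d) > 0))) /\
  (c >= cp a b d ->
     xB c d < xgm a b c d /\
     (forall n : nat, (1 <= n)%nat ->
        W a b c d n (xgp a b c d) > 0 /\ W a b c d n (xgm a b c d) > 0) /\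
     (forall n : nat, (2 <= n)%nat ->
        (-1) ^ n * W a b c d n (xDp a b c d) < 0)).
Proof.
  unfold nplus, Apol, hpol, cm, cp.
  assert (Hp : a^2 * xDp a b c d = -a*b-2*c+2*sqrt (DeltaD a b c d)) by (unfold xDp; field; intro; lra).
  assert (Hm : a^2 * xDm a b c d = -a*b-2*c-2*sqrt (DeltaD a b c d)) by (unfold xDm; field; intro; lra).
  assert (HxA : a * xA a b + b = 0) by (unfold xA; field; intro; lra).
  assert (HxB : c * xB c d + d = 0) by (unfold xB; field; intro; lra).
  assert (Hgp : 2*(1-a)*xgp a b c d = b+c+sqrt (Deltag a b c d)) by (unfold xgp; field; intro; lra).
  assert (Hgm : 2*(1-a)*xgm a b c d = b+c-sqrt (Deltag a b c d)) by (unfold xgm; field; intro; lra).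
  assert (HDDe : DeltaD a b c d = -a^2*d + a*b*c + c^2) by (unfold DeltaD; ring).
  assert (HDge : Deltag a b c d = (b+c)^2 + 4*d*(1-a)) by (unfold Deltag; ring).
  assert (Hs0 : 0 <= sqrt (DeltaD a b c d)) by apply sqrt_pos.
  assert (HDDc : DeltaD a b c d > c^2).
  { rewrite HDDe. assert (a*b>0) by nra. assert (a^2*(-d) > 0) by (apply Rmult_lt_0_compat; nra). assert (a*b*c>0) by nra. lra. }
  assert (Hs2 : sqrt (DeltaD a b c d) ^ 2 = DeltaD a b c d)
    by (simpl; rewrite Rmult_1_r; apply sqrt_sqrt; nra).
  assert (Hsg0 : 0 <= sqrt (Deltag a b c d)) by apply sqrt_pos.
  assert (Hsg2 : Deltag a b c d >= 0 -> sqrt (Deltag a b c d) ^ 2 = Deltag a b c d)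
    by (intro; simpl; rewrite Rmult_1_r; apply sqrt_sqrt; lra).
  assert (Hr0 : 0 < sqrt (d*(a-1))) by (apply sqrt_lt_R0; nra).
  assert (Hr2 : sqrt (d*(a-1)) ^ 2 = d*(a-1))
    by (simpl; rewrite Rmult_1_r; apply sqrt_sqrt; nra).
  set (p := xDp a b c d) in *. set (m := xDm a b c d) in *.
  set (xa := xA a b) in *. set (xb := xB c d) in *.
  set (gp := xgp a b c d) in *. set (gm := xgm a b c d) in *.
  set (s := sqrt (DeltaD a b c d)) in *. set (sg := sqrt (Deltag a b c d)) in *.
  set (r := sqrt (d*(a-1))) in *.
  set (DD := DeltaD a b c d) in *. set (Dg := Deltag a b c d) in *.
  clearbody p m xa xb gp gm s sg r DD Dg.

  assert (HAp : a*(a*p+b) = 2*(s-c)).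
  { replace (a*(a*p+b)) with (a^2*p + a*b) by ring. rewrite Hp. ring. }
  assert (HAm : a*(a*m+b) = -2*(s+c)).
  { replace (a*(a*m+b)) with (a^2*m + a*b) by ring. rewrite Hm. ring. }
  assert (Hsc : s > c) by nra.
  assert (HApn : a*p+b < 0) by nra.
  assert (HAmp : a*m+b > 0) by nra.
  assert (HBp : c*p+d = -((a*p+b)/2)^2).
  { apply Rmult_eq_reg_l with (4*a^2); [|intro; nra].
    replace (4*a^2*(c*p+d)) with (4*(c*(a^2*p) + a^2*d)) by ring.
    replace (4 * a ^ 2 * - ((a * p + b) / 2) ^ 2) with (-(a*(a*p+b))^2) by (field).
    rewrite Hp, HAp.
    replace (-(2*(s-c))^2) with (-4*s^2 + 8*s*c - 4*c^2) by ring. rewrite Hs2, HDDe. ring. }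
  assert (HBm : c*m+d = -((a*m+b)/2)^2).
  { apply Rmult_eq_reg_l with (4*a^2); [|intro; nra].
    replace (4*a^2*(c*m+d)) with (4*(c*(a^2*m) + a^2*d)) by ring.
    replace (4 * a ^ 2 * - ((a * m + b) / 2) ^ 2) with (-(a*(a*m+b))^2) by (field).
    rewrite Hm, HAm.
    replace (-(-2*(s+c))^2) with (-4*s^2 - 8*s*c - 4*c^2) by ring. rewrite Hs2, HDDe. ring. }
  assert (Hmxa : m < xa) by nra.
  assert (Hxa0 : xa < 0) by nra.
  assert (Hxb0 : 0 < xb) by nra.
  assert (Hxap : xa < p) by nra.
  assert (HBpn : c*p+d < 0).
  { rewrite HBp. assert (((a*p+b)/2)^2 > 0) by nra. lra. }
  assert (Hpxb : p < xb) by nra.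
  split; [repeat split; lra|].
  split; [split; lra|].
  split; [split; lra|].
  split.
  { intros n Hn. split; [|split].
    - apply WxA; auto; nra.
    - apply WxB; auto; nra.
    - destruct n as [|n]; [lia|].
      rewrite (Wdouble a b c d m ((a*m+b)/2)); [|lra|exact HBm].
      assert (((a*m+b)/2)^n > 0) by (apply pow_lt; lra).
      assert (1 <= INR (S n)) by (rewrite S_INR; pose proof (pos_INR n); lra).
      assert ((a*m+b)/2 + INR (S n) * (m - (a*m+b)/2) < 0) by nra.
      nra. }

  assert (Hh : a^2 * ((2-a)*p - b) = 2*((2-a)*s - (a*b + (2-a)*c))).
  { replace (a^2 * ((2-a)*p - b)) with ((2-a)*(a^2*p) - a^2*b) by ring. rewrite Hp. ring. }
  assert (Hhsq : (2-a)^2*s^2 - (a*b + (2-a)*c)^2 = a^2*(DD - Dg)).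
  { rewrite Hs2, HDDe, HDge. ring. }
  assert (HK : a*b + (2-a)*c > 0) by nra.
  assert (Ha2 : a^2 > 0) by nra.
  assert (Hhpos : DD > Dg -> (2-a)*p - b > 0).
  { intro HD. assert ((2-a)^2*s^2 > (a*b + (2-a)*c)^2) by nra.
    assert ((2-a)*s > a*b + (2-a)*c) by nra. nra. }
  assert (Hhneg : DD <= Dg -> (2-a)*p - b <= 0).
  { intro HD. assert ((2-a)^2*s^2 <= (a*b + (2-a)*c)^2) by nra.
    assert ((2-a)*s <= a*b + (2-a)*c).
    { destruct (Rle_or_lt ((2-a)*s) (a*b + (2-a)*c)) as [|Hlt]; [auto|exfalso].
      assert (((2-a)*s - (a*b + (2-a)*c))*((2-a)*s + (a*b + (2-a)*c)) > 0)
        by (apply Rmult_lt_0_compat; nra).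
      nra. }
    destruct (Rle_or_lt ((2-a)*p - b) 0) as [|Hlt]; [auto|].
    assert (a^2*((2-a)*p - b) > 0) by (apply Rmult_lt_0_compat; lra). lra. }
  assert (HWp : forall n, (-1)^(S n) * W a b c d (S n) p =
     ((a*p+b)/2*(-1))^n * (-(((a*p+b) + INR (S n) * ((2-a)*p-b))/2))).
  { intro n. rewrite (Wdouble a b c d p ((a*p+b)/2)); [|lra|exact HBp].
    rewrite sign_pow. f_equal; [f_equal; ring|field]. }
  assert (Hlp : forall n, ((a*p+b)/2*(-1))^n > 0) by (intro; apply pow_lt; lra).
  split.
  { intro hcm.
    assert (HDg0 : Dg >= 0) by (rewrite HDge; nra).
    specialize (Hsg2 HDg0).
    assert (Hgp0 : b+c+sg < 0).
    { destruct (Rlt_or_le (b+c+sg) 0) as [|Hle]; [auto|exfalso].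
      assert (Hbc : b + c < 0) by lra.
      assert (sg*sg >= (-(b+c))*(-(b+c))) by (apply Rmult_ge_compat; lra).
      rewrite HDge in Hsg2. assert (d*(1-a) < 0) by nra. nra. }
    assert (Hpgm : p <= gm).
    { set (K := a*b + (2-a)*c).
      set (F := c^2*(a^2-8*a+8) - 2*b*c*(a^2+2*a-4) + b^2*(2-a)^2 + 16*(1-a)^2*d).
      assert (I1 : (2-a)^2*K^2 - 16*(1-a)^2*s^2 = a^2*F).
      { unfold K, F. rewrite Hs2, HDDe. ring. }
      assert (I2 : F = 4*((1-a)*c - a*r)^2 + (-b-c-2*r)*(2*c*(a^2+2*a-4) + (-b+c+2*r)*(2-a)^2)
                       + 16*(1-a)*(r^2 - d*(a-1))).
      { unfold F. ring. }
      assert (Hbr : 2*c*(a^2+2*a-4) + (-b+c+2*r)*(2-a)^2 >= 0).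
      { assert ((-b-c-2*r)*(2-a)^2 >= 0) by (apply Rle_ge, Rmult_le_pos; [lra| apply pow2_ge_0]).
        assert (r*(2-a)^2 >= 0) by (apply Rle_ge, Rmult_le_pos; [lra| apply pow2_ge_0]).
        assert (c*(a*(a-1)) >= 0) by (apply Rle_ge, Rmult_le_pos; [lra| nra]).
        nra. }
      assert (HF : F >= 0).
      { rewrite I2, Hr2.
        assert ((-b-c-2*r)*(2*c*(a^2+2*a-4) + (-b+c+2*r)*(2-a)^2) >= 0)
          by (apply Rle_ge, Rmult_le_pos; lra).
        pose proof (pow2_ge_0 ((1-a)*c - a*r)). lra. }
      assert (Hk : 4*(1-a)*s <= (2-a)*K).
      { apply sq_le. unfold K; apply Rmult_le_pos; lra.
        assert (a^2*F >= 0) by (apply Rle_ge, Rmult_le_pos; lra).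
        replace ((4*(1-a)*s)^2) with (16*(1-a)^2*s^2) by ring.
        replace (((2-a)*K)^2) with ((2-a)^2*K^2) by ring. lra. }
      assert (Hw : 2*(1-a)*p - (b+c) <= 0).
      { assert (a^2*(2*(1-a)*p - (b+c)) <= 0).
        { replace (a^2*(2*(1-a)*p - (b+c))) with (2*(1-a)*(a^2*p) - a^2*(b+c)) by ring.
          rewrite Hp. replace (2 * (1 - a) * (- a * b - 2 * c + 2 * s) - a ^ 2 * (b + c))
            with (4*(1-a)*s - (2-a)*K) by (unfold K; ring). lra. }
        destruct (Rle_or_lt (2*(1-a)*p - (b+c)) 0) as [|Hlt]; auto.
        assert (a^2*(2*(1-a)*p - (b+c)) > 0) by (apply Rmult_lt_0_compat; lra). lra. }
      assert (Hg : 4*(1-a)*((1-a)*p^2 - (b+c)*p - d) = (2*(1-a)*p - (b+c))^2 - Dg)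
        by (rewrite HDge; ring).
      assert (Hg0 : (1-a)*p^2 - (b+c)*p - d = (p - (a*p+b)/2)^2).
      { replace ((1-a)*p^2 - (b+c)*p - d) with (p^2 - (a*p+b)*p - (c*p+d)) by ring.
        rewrite HBp. field. }
      assert (4*(1-a)*((1-a)*p^2 - (b+c)*p - d) >= 0).
      { rewrite Hg0. apply Rle_ge, Rmult_le_pos; [lra|apply pow2_ge_0]. }
      assert (sg <= -(2*(1-a)*p - (b+c))).
      { apply sq_le. lra. replace ((-(2*(1-a)*p - (b+c)))^2) with ((2*(1-a)*p - (b+c))^2) by ring. lra. }
      assert (2*(1-a)*(gm - p) >= 0) by lra.
      destruct (Rle_or_lt p gm) as [|Hlt]; auto.
      assert (2*(1-a)*(gm - p) < 0). { apply Ropp_lt_cancel. rewrite Ropp_0.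
        replace (-(2*(1-a)*(gm-p))) with (2*(1-a)*(p-gm)) by ring. apply Rmult_lt_0_compat; lra. }
      lra. }
    assert (Hgmgp : gm <= gp).
    { apply (Rmult_le_reg_l (2*(1-a))); [lra| rewrite Hgp, Hgm; lra]. }
    assert (Hgpn : gp < 0).
    { apply (Rmult_lt_reg_l (2*(1-a))); [lra| rewrite Hgp, Rmult_0_r; lra]. }
    split; [split; [exact Hpgm | split; assumption]|].
    split.
    { intros n Hn.
      rewrite (Wroot a b c d gp), (Wroot a b c d gm).
      2: { apply (groot a b c d gm sg); [lra|rewrite Hsg2; exact HDge|]. rewrite Hgm. ring. }
      2: { apply (groot a b c d gp sg); [lra|rewrite Hsg2; exact HDge|]. rewrite Hgp. ring. }
      rewrite <- !Rpow_mult_distr.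
      split; apply pow_lt; lra. }
    intros n Hn. destruct n as [|n]; [lia|]. rewrite HWp.
    pose proof (Hlp n).
    assert (HN : 1 <= INR (S n)) by (rewrite S_INR; pose proof (pos_INR n); lra).
    split; [|split].
    - intros [HD HN2]. pose proof (Hhpos HD).
      assert (Hdiv : - (a * p + b) / ((2 - a) * p - b) * ((2 - a) * p - b) = -(a*p+b)) by (field; lra).
      assert (INR (S n) * ((2-a)*p-b) > -(a*p+b)).
      { rewrite <- Hdiv. apply Rmult_lt_compat_r; lra. }
      apply pos_neg; lra.
    - intros [HD HN2]. pose proof (Hhpos HD).
      assert (Hdiv : - (a * p + b) / ((2 - a) * p - b) * ((2 - a) * p - b) = -(a*p+b)) by (field; lra).
      rewrite HN2.
      replace (- (a * p + b) / ((2 - a) * p - b) * ((2 - a) * p - b)) with (-(a*p+b)) by auto.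
      replace (a * p + b + - (a * p + b)) with 0 by ring. lra.
    - intros Hnot. destruct (Rlt_or_le Dg DD) as [HD|HD].
      + pose proof (Hhpos HD).
        assert (HN2 : INR (S n) < - (a * p + b) / ((2 - a) * p - b)).
        { apply Rnot_ge_lt. intro. apply Hnot. split; lra. }
        assert (Hdiv : - (a * p + b) / ((2 - a) * p - b) * ((2 - a) * p - b) = -(a*p+b)) by (field; lra).
        assert (INR (S n) * ((2-a)*p-b) < -(a*p+b)).
        { rewrite <- Hdiv. apply Rmult_lt_compat_r; lra. }
        apply Rmult_lt_0_compat; lra.
      + pose proof (Hhneg HD).
        assert (INR (S n) * ((2-a)*p-b) <= 0).
        { rewrite <- (Rmult_0_r (INR (S n))). apply Rmult_le_compat_l; lra. }
        apply Rmult_lt_0_compat; lra. }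
  intro hcp.
  assert (Hbc : b + c >= 2*r) by lra.
  assert (Hr2' : 4*d*(1-a) = -4*r^2) by (rewrite Hr2; ring).
  assert (HDg0 : Dg >= 0).
  { rewrite HDge, Hr2'. assert ((b+c)*(b+c) >= (2*r)*(2*r)) by (apply Rmult_ge_compat; lra). nra. }
  specialize (Hsg2 HDg0).
  assert (Hcsg : c*sg < c*(b+c) - 2*r^2).
  { apply sq_lt.
    - assert (c*(b+c) >= (b+c)*(b+c)) by (apply Rmult_ge_compat_r; lra).
      assert ((b+c)*(b+c) >= (2*r)*(2*r)) by (apply Rmult_ge_compat; lra).
      assert (r^2 > 0) by (apply pow_lt; lra). nra.
    - assert (Hid : (c*(b+c) - 2*r^2)^2 - (c*sg)^2 = 4*r^2*(r^2 - c*b)).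
      { replace ((c*sg)^2) with (c^2*sg^2) by ring. rewrite Hsg2, HDge, Hr2'. ring. }
      assert (4*r^2*(r^2 - c*b) > 0).
      { apply Rmult_lt_0_compat. assert (r^2 > 0) by (apply pow_lt; lra). lra.
        assert (c*b < 0) by (apply pos_neg; lra). assert (r^2 > 0) by (apply pow_lt; lra). lra. }
      lra. }
  assert (Hxbgm : xb < gm).
  { assert (Hid : 2*(1-a)*c*(gm - xb) = c*(2*(1-a)*gm) - 2*(1-a)*(c*xb)) by ring.
    rewrite Hgm in Hid. replace (c*xb) with (-d) in Hid by lra.
    assert (2*(1-a)*(-d) = 2*r^2) by (rewrite Hr2; ring).
    assert (2*(1-a)*c*(gm - xb) > 0) by nra.
    apply Rlt_Rminus in Hxb0.
    destruct (Rlt_or_le xb gm) as [|Hle]; auto. exfalso.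
    assert (2*(1-a)*c*(gm - xb) <= 0).
    { rewrite <- (Rmult_0_r (2*(1-a)*c)). apply Rmult_le_compat_l. apply Rmult_le_pos; lra. lra. }
    lra. }
  assert (Hgmgp : gm <= gp).
  { apply (Rmult_le_reg_l (2*(1-a))); [lra| rewrite Hgp, Hgm; lra]. }
  split; [exact Hxbgm|].
  split.
  { intros n Hn.
    rewrite (Wroot a b c d gp), (Wroot a b c d gm).
    2: { apply (groot a b c d gm sg); [lra|rewrite Hsg2; exact HDge|]. rewrite Hgm. ring. }
    2: { apply (groot a b c d gp sg); [lra|rewrite Hsg2; exact HDge|]. rewrite Hgp. ring. }
    split; apply pow_lt; lra. }
  set (L := 2*a*b + (4-a)*c).
  assert (HL : L > 0) by (unfold L; nra).
  assert (H4 : a^2 * ((4-a)*p - b) = 2*((4-a)*s - L)).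
  { replace (a^2 * ((4-a)*p - b)) with ((4-a)*(a^2*p) - a^2*b) by ring. rewrite Hp. unfold L. ring. }
  set (Q := d*(4-a)^2 + b*(c*(4-a) + 4*b)).
  assert (H4sq : ((4-a)*s)^2 - L^2 = -a^2*Q).
  { replace (((4-a)*s)^2) with ((4-a)^2*s^2) by ring. rewrite Hs2, HDDe. unfold L, Q. ring. }
  assert (HQ : Q < 0).
  { unfold Q. assert (c*(4-a) + 4*b > 0).
    { assert (c*(4-a) >= -b*(4-a)) by (apply Rmult_ge_compat_r; lra). nra. }
    assert (b*(c*(4-a) + 4*b) < 0).
    { rewrite Rmult_comm. apply pos_neg; lra. }
    assert (d*(4-a)^2 < 0). { rewrite Rmult_comm. apply pos_neg; [apply pow_lt|]; lra. }
    lra. }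
  assert (HLs : L < (4-a)*s).
  { apply sq_lt. apply Rmult_le_pos; lra. assert (a^2*Q < 0) by (apply pos_neg; lra). lra. }
  assert (H4p : (4-a)*p - b > 0).
  { apply (Rmult_lt_reg_l (a^2)); [lra|]. rewrite Rmult_0_r, H4. lra. }
  intros n Hn. destruct n as [|n]; [lia|]. rewrite HWp.
  pose proof (Hlp n).
  assert (HN : 2 <= INR (S n)).
  { rewrite S_INR. assert (1 <= INR n). { change 1 with (INR 1). apply le_INR. lia. } lra. }
  assert (Hh0 : (2-a)*p - b > 0) by lra.
  assert (INR (S n) * ((2-a)*p-b) >= 2 * ((2-a)*p-b)) by (apply Rmult_ge_compat_r; lra).
  apply pos_neg; lra.
Qed.
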